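(* Let $\varphi$ be a real-valued Orlicz integrand. Then $C_\varphi(\mu)$ and $C^\sigma_\varphi(\mu)$ are almost decomposable with respect to $\mu$.
   Context: $(\Omega,\mathcal{A},\mu)$ measure space with nontrivial positive measure, $X$ real Banach space. Orlicz integrand: $\varphi\colon\Omega\times X\to[0,\infty]$ with $\varphi(\omega,\cdot)$ even, convex, lsc, proper, $\varphi(\omega,x)\to0$ as $x\to0$, $\varphi(\omega,x)\to\infty$ as $\|x\|\to\infty$ for a.e. $\omega$, and restriction to $A\times W$ being $\mathcal{A}(A)\otimes\mathcal{B}(W)$-measurable for every set $A$ that is a union of countably many atoms and a $\sigma$-finite set and every separable $W\subset X$; real-valued means $\varphi(\omega,x)<\infty$ for all $x$ and a.e. $\omega$. $L_\varphi(\mu)$: a.e.-classes of strongly measurable $u$ with finite Luxemburg norm $\|u\|_\varphi=\inf\{\alpha>0:\int\varphi(\omega,u/\alpha)d\mu\le1\}$. $C_\varphi(\mu)$: $u\in L_\varphi(\mu)$ with $\|u\chi_{E_n}\|_\varphi\to0$ for every sequence $E_n\in\mathcal{A}$ with $\chi_{E_n}\to0$ a.e.; $C^\sigma_\varphi(\mu)$: its elements vanishing outside a $\sigma$-finite set. A space $S$ of measurable functions $\Omega\to X$ is almost decomposable if for every $u_0\in S$, $F\in\mathcal{A}$ with $\mu(F)<\infty$, $\varepsilon>0$ and bounded strongly measurable $u_1\colon F\to X$ there is measurable $F_\varepsilon\subset F$ with $\mu(F\setminus F_\varepsilon)<\varepsilon$ and $u_0\chi_{\Omega\setminus F_\varepsilon}+u_1\chi_{F_\varepsilon}\in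 S$. *)

(* Defs.v *)
From HB Require Import structures.
From mathcomp Require Import all_boot all_order all_algebra.
From mathcomp Require Import all_classical all_reals all_analysis.
From mathcomp Require Import measurable_realfun.
Set Implicit Arguments. Unset Strict Implicit. Unset Printing Implicit Defensive.
Import Order.TTheory GRing.Theory Num.Theory.
Import numFieldNormedType.Exports.
Local Open Scope classical_set_scope.
Local Open Scope ring_scope.

Definition borel_set (R : realType) (X : normedModType R) : set (set X) :=
  <<s [set U : set X | open U] >>.

Definition separable_subset (R : realType) (X : normedModType R) (W : set X) :=
  exists C : set X, [/\ countable C, C `<=` W & W `<=` closure C].

Definition atom d (T : measurableType d) (R : realType)
    (mu : {measure set T -> \bar R}) (E : set T) :=
  [/\ measurable E, (0 < mu E)%E &
      forall F, measurable F -> F `<=` E -> mu F = 0%E \/ mu (E `\` F) = 0%E].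

(* A is the union of countably many atoms and a sigma-finite set
   (an index n with E n = set0 encodes "no atom"; this allows finitely many) *)
Definition atoms_sigma_union d (T : measurableType d) (R : realType)
    (mu : {measure set T -> \bar R}) (A : set T) :=
  exists (E : (set T)^nat) (S : set T),
    [/\ forall n, E n = set0 \/ atom mu (E n),
        sigma_finite S mu &
        A = (\bigcup_n E n) `|` S].

(* The restriction of phi to A x W is A(A) (x) B(W)-measurable, where
   A(A) = trace of the sigma-algebra on A and B(W) = Borel sets of W
   (= traces on W of Borel sets of X). *)
Definition restr_prod_measurable d (T : measurableType d) (R : realType)
    (X : normedModType R) (phi : T -> X -> \bar R) (A : set T) (W : set X) :=
  forall V : set (\bar R), measurable V ->
    <<s A `*` W,
        [set Q : set (T * X) | exists E B, [/\ measurable E, borel_set B &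
                                  Q = (A `&` E) `*` (W `&` B)]] >>
      [set p | (A `*` W) p /\ V (phi p.1 p.2)].

Definition orlicz_integrand d (T : measurableType d) (R : realType)
    (mu : {measure set T -> \bar R}) (X : completeNormedModType R)
    (phi : T -> X -> \bar R) :=
  [/\ forall w x, (0 <= phi w x)%E,
      {ae mu, forall w,
        [/\ forall x, phi w (- x) = phi w x,
            forall (t : R) (x y : X), 0 <= t <= 1 ->
               (phi w ((t *: x + (1 - t) *: y)%R)
                 <= t%:E * phi w x + (1 - t)%:E * phi w y)%E,
            forall (x : X) (a : R),
               (a%:E < phi w x)%E -> (\forall y \near x, (a%:E < phi w y)%E),
            (exists x, (phi w x < +oo)%E) /\
            (phi w x @[x --> (0 : X)] --> 0%E) &
               forall M : R, exists r : R, forall x, r < `|x| -> (M%:E < phi w x)%E]} &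
      forall A W, atoms_sigma_union mu A -> separable_subset W ->
        restr_prod_measurable phi A W].

Definition real_valued_integrand d (T : measurableType d) (R : realType)
    (mu : {measure set T -> \bar R}) (X : completeNormedModType R)
    (phi : T -> X -> \bar R) :=
  {ae mu, forall w, forall x, (phi w x < +oo)%E}.

Definition simple_fun d (T : measurableType d) (R : realType)
    (X : normedModType R) (s : T -> X) :=
  finite_set (range s) /\ forall x, measurable (s @^-1` [set x]).

Definition strongly_measurable d (T : measurableType d) (R : realType)
    (mu : {measure set T -> \bar R}) (X : normedModType R) (u : T -> X) :=
  exists s : nat -> T -> X, (forall n, simple_fun (s n)) /\
    {ae mu, forall w, s n w @[n --> \oo] --> u w}.

(* Luxemburg norm (in \bar R, +oo when the defining set is empty) *)
Definition lux_norm d (T : measurableType d) (R : realType)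
    (mu : {measure set T -> \bar R}) (X : completeNormedModType R)
    (phi : T -> X -> \bar R) (u : T -> X) : \bar R :=
  ereal_inf [set a%:E | a in [set a : R | 0 < a /\
              (\int[mu]_w phi w (a^-1 *: u w) <= 1)%E]].

(* L_phi(mu), as a set of functions (closed under a.e. equality) *)
Definition L_phi d (T : measurableType d) (R : realType)
    (mu : {measure set T -> \bar R}) (X : completeNormedModType R)
    (phi : T -> X -> \bar R) : set (T -> X) :=
  [set u | strongly_measurable mu u /\ (lux_norm mu phi u < +oo)%E].

Definition C_phi d (T : measurableType d) (R : realType)
    (mu : {measure set T -> \bar R}) (X : completeNormedModType R)
    (phi : T -> X -> \bar R) : set (T -> X) :=
  [set u | L_phi mu phi u /\
    forall E : (set T)^nat, (forall n, measurable (E n)) ->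
      {ae mu, forall w, \1_(E n) w @[n --> \oo] --> (0 : R)} ->
      lux_norm mu phi (fun w => \1_(E n) w *: u w) @[n --> \oo] --> 0%E].

Definition C_phi_sigma d (T : measurableType d) (R : realType)
    (mu : {measure set T -> \bar R}) (X : completeNormedModType R)
    (phi : T -> X -> \bar R) : set (T -> X) :=
  [set u | C_phi mu phi u /\
    exists S : set T, sigma_finite S mu /\ {ae mu, forall w, ~ S w -> u w = 0}].

Definition almost_decomposable d (T : measurableType d) (R : realType)
    (mu : {measure set T -> \bar R}) (X : completeNormedModType R)
    (S : set (T -> X)) :=
  forall (u0 : T -> X) (F : set T) (eps : R) (u1 : T -> X),
    S u0 -> measurable F -> (mu F < +oo)%E -> 0 < eps ->
    (exists M : R, forall w, F w -> `|u1 w| <= M) ->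
    strongly_measurable mu (fun w => \1_F w *: u1 w) ->
    exists Fe : set T, [/\ measurable Fe, Fe `<=` F,
      (mu (F `\` Fe) < eps%:E)%E &
      S (fun w => \1_(~` Fe) w *: u0 w + \1_Fe w *: u1 w)].

(* Main.v *)
Require Import Defs.
From HB Require Import structures.
From mathcomp Require Import all_boot all_order all_algebra.
From mathcomp Require Import all_classical all_reals all_analysis.
From mathcomp Require Import measurable_realfun.
From mathcomp Require Import lra.
Import Order.TTheory GRing.Theory Num.Theory.
Import numFieldNormedType.Exports.
Local Open Scope classical_set_scope.
Local Open Scope ring_scope.
Set Implicit Arguments. Unset Strict Implicit. Unset Printing Implicit Defensive.
Section pointwise.
Context (R : realType) (X : normedModType R) (f : X -> \bar R).
Hypothesis f0 : forall x, (0 <= f x)%E.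
Hypothesis conv : forall (t : R) (x y : X), 0 <= t <= 1 ->
  (f ((t *: x + (1 - t) *: y)%R) <= t%:E * f x + (1 - t)%:E * f y)%E.
Hypothesis lim0 : f x @[x --> (0 : X)] --> 0%E.

Lemma pw_f0 : f 0 = 0%E.
Proof.
have /fine_cvgP[fin gcv] := lim0.
have fin0 : f 0 \is a fin_num by exact: (nbhs_singleton fin).
have g0 : fine (f 0) = 0.
  apply/eqP; rewrite -normr_le0; apply/ler_addgt0Pr => e e0; rewrite add0r.
  move/cvgrPdist_lt : gcv => /(_ e e0) h; have := nbhs_singleton h.
  by rewrite /= sub0r normrN => /ltW.
by rewrite -(fineK fin0) g0.
Qed.

Lemma pw_scale (t : R) x : 0 <= t <= 1 -> (f (t *: x) <= t%:E * f x)%E.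
Proof.
move=> t01; have := @conv t x 0 t01.
by rewrite scaler0 addr0 pw_f0 mule0 adde0.
Qed.

Lemma pw_mono (s t : R) x : 0 <= s -> s <= t -> (f (s *: x) <= f (t *: x))%E.
Proof.
move=> s0 st; have [t0|t0] := eqVneq t 0.
  have -> : s = 0 by apply/eqP; rewrite eq_le s0 andbT -t0.
  by rewrite t0.
have tpos : 0 < t by rewrite lt_neqAle eq_sym t0 (le_trans s0 st).
have -> : s *: x = (s / t) *: (t *: x) by rewrite scalerA divfK.
apply: le_trans; first apply: pw_scale.
  by apply/andP; split; [exact: divr_ge0 s0 (ltW tpos)|rewrite ler_pdivrMr// mul1r].
rewrite -[X in (_ <= X)%E]mul1e lee_wpmul2r//.
by rewrite lee_fin ler_pdivrMr// mul1r.
Qed.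

Lemma pw_mid (a b : X) :
  (f ((2^-1 *: a + 2^-1 *: b)%R) <= 2^-1%:E * f a + 2^-1%:E * f b)%E.
Proof.
have h : (1 - 2^-1 : R) = 2^-1 by rewrite {1}(splitr 1) mul1r addrK.
have := @conv 2^-1 a b; rewrite h; apply.
by rewrite invr_ge0 ler0n /= invf_le1 // ler1n.
Qed.

Lemma pw_eventually_lt1 (y : nat -> X) : y n @[n --> \oo] --> (0 : X) ->
  \forall n \near \oo, (f (y n) < 1)%E.
Proof.
move=> yc; have fc : f (y n) @[n --> \oo] --> 0%E.
  exact: (cvg_comp _ _ yc lim0).
have /fine_cvgP[fin gcv] := fc.
move/cvgrPdist_lt : gcv => /(_ 1 ltr01).
apply: filterS2 fin => n fn /=; rewrite sub0r normrN => h.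
by rewrite -(fineK fn) lte_fin (le_lt_trans (ler_norm _) h).
Qed.
End pointwise.
Section meas.
Context d (T : measurableType d) (R : realType) (X : normedModType R).

Lemma section_meas (F : set T) (x : X) : measurable F ->
  forall Q, <<s F `*` [set x],
        [set Q : set (T * X) | exists E B, [/\ measurable E, borel_set B &
                                  Q = (F `&` E) `*` ([set x] `&` B)]] >> Q ->
  measurable (F `&` [set w | Q (w, x)]).
Proof.
move=> mF; apply: smallest_sub.
  split => /=.
  - by rewrite (_ : _ `&` _ = set0) //; apply/seteqP; split => w //= [].
  - move=> A mA; rewrite (_ : _ `&` _ = F `\` (F `&` [set w | A (w, x)])).
      exact: measurableD.
    apply/seteqP; split => w /=.
      by move=> [Fw [_ nA]]; split => // -[].
    move=> [Fw nA]; split => //; split; first by split.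
    by move=> Aw; apply: nA.
  - move=> A mA; rewrite (_ : _ `&` _ = \bigcup_k (F `&` [set w | A k (w, x)])).
      exact: bigcupT_measurable.
    apply/seteqP; split => w /=.
      by move=> [Fw [k _ Ak]]; exists k.
    by move=> [k _ [Fw Ak]]; split => //; exists k.
move=> Q [E [B [mE _ ->]]] /=.
have [Bx|nBx] := pselect (B x).
  rewrite (_ : _ `&` _ = F `&` E); first exact: measurableI.
  by apply/seteqP; split => w /=; [move=> [_ [[]]]|move=> [Fw Ew]; split => //; split].
rewrite (_ : _ `&` _ = set0) //.
by apply/seteqP; split => w //= [_ [_ [_ ?]]].
Qed.
End meas.
Section meas2.
Context d (T : measurableType d) (R : realType) (mu : {measure set T -> \bar R})
  (X : completeNormedModType R) (phi : T -> X -> \bar R).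
Hypothesis hO : forall A W, atoms_sigma_union mu A -> separable_subset W ->
  restr_prod_measurable phi A W.

Lemma finite_atoms F : measurable F -> (mu F < +oo)%E -> atoms_sigma_union mu F.
Proof.
move=> mF muF; exists (fun _ => set0), F; split.
- by move=> n; left.
- exists (fun _ => F); last by move=> i; split.
  apply/seteqP; split => w.
    by move=> Fw; exists 0%N.
  by move=> [].
- apply/seteqP; split => w; first by right.
  by move=> [[]|].
Qed.

Lemma phi_x_meas F (x : X) : measurable F -> (mu F < +oo)%E ->
  measurable_fun F (fun w => phi w x).
Proof.
move=> mF muF _ Y mY.
have sep : separable_subset [set x].
  by exists [set x]; split; [exact: countable1| by []|exact: subset_closure].
have := hO (finite_atoms mF muF) sep mY.
move/(section_meas mF).
rewrite (_ : _ `&` _ = F `&` (fun w => phi w x) @^-1` Y) //.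
apply/seteqP; split => w /=; first by move=> [Fw [_ Yw]].
by move=> [Fw Yw]; split => //; split.
Qed.

Lemma phi_simple_meas F (c : R) (s : T -> X) : measurable F -> (mu F < +oo)%E ->
  simple_fun s -> measurable_fun F (fun w => phi w (c *: s w)).
Proof.
move=> mF muF [fins ms] _ Y mY.
rewrite (_ : _ `&` _ = \bigcup_(y in range s)
   ((s @^-1` [set y]) `&` (F `&` (fun w => phi w (c *: y)) @^-1` Y))).
  apply: fin_bigcup_measurable => // y _.
  by apply: measurableI => //; exact: phi_x_meas.
apply/seteqP; split => w /=.
  by move=> [Fw Yw]; exists (s w) => //; exists w.
by move=> [y _ [sw [Fw Yw]]]; split => //; rewrite sw.
Qed.
End meas2.
Section limsup.
Context (R : realType).
Local Open Scope ereal_scope.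

Definition lsup (u : nat -> \bar R) := einfs (esups u) 0%N.

Lemma lsup_le (u : nat -> \bar R) b : (\forall n \near \oo, u n <= b) -> lsup u <= b.
Proof.
move=> [N _ HN]; rewrite /lsup /einfs /=.
apply: le_trans (ereal_inf_lbound _) _; first by exists N.
rewrite /esups /=; apply: ge_ereal_sup => _ [n /= Nn <-]; exact: HN.
Qed.

Lemma lsup_ge (u : nat -> \bar R) a : (\forall n \near \oo, a <= u n) -> a <= lsup u.
Proof.
move=> [N _ HN]; rewrite /lsup /einfs /=.
apply: le_ereal_inf_tmp => _ [m /= _ <-]; rewrite /esups /=.
apply: le_trans (ereal_sup_ubound _); last by exists (maxn m N) => //=; exact: leq_maxl.
apply: HN; rewrite /= leq_maxr //.
Qed.
End limsup.
Section pointbound.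
Context (R : realType) (X : normedModType R) (f : X -> \bar R).
Hypothesis f0 : forall x, (0 <= f x)%E.
Hypothesis conv : forall (t : R) (x y : X), 0 <= t <= 1 ->
  (f ((t *: x + (1 - t) *: y)%R) <= t%:E * f x + (1 - t)%:E * f y)%E.
Hypothesis lim0 : f x @[x --> (0 : X)] --> 0%E.

Lemma half_split (c : R) (a b : X) :
  c *: a = 2^-1 *: ((2 * c) *: b) + 2^-1 *: ((2 * c) *: (a - b)).
Proof.
rewrite !scalerA mulrA mulVf ?pnatr_eq0 // mul1r -scalerDr.
by rewrite addrC subrK.
Qed.

Lemma half_le (a b : \bar R) : (0 <= a)%E -> (0 <= b)%E -> (b <= 1)%E ->
  (2^-1%:E * a + 2^-1%:E * b <= a + 1)%E.
Proof.
move=> a0 b0 b1; apply: leeD.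
  rewrite -[X in (_ <= X)%E]mul1e lee_wpmul2r // lee_fin invf_le1 // ler1n //.
apply: le_trans b1; rewrite -[X in (_ <= X)%E]mul1e lee_wpmul2r // lee_fin invf_le1 // ler1n //.
Qed.

Lemma bound_step (c : R) (a b : X) : (f ((2 * c) *: (a - b)) <= 1)%E ->
  (f (c *: a) <= f ((2 * c) *: b) + 1)%E.
Proof.
move=> h; rewrite (half_split c a b).
apply: le_trans (pw_mid conv _ _) _.
by apply: half_le.
Qed.

Variables (s : nat -> X) (u : X).
Hypothesis su : s n @[n --> \oo] --> u.

Lemma pw_bound (k : R) : (f (k *: u) <= lsup (fun n => f ((2 * k) *: s n) + 1))%E.
Proof.
apply: lsup_ge.
have : (2 * k) *: (u - s n) @[n --> \oo] --> (0 : X).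
  rewrite -(scaler0 _ (2 * k)); apply: cvgZr.
  rewrite -(subrr u); apply: cvgB => //; exact: cvg_cst.
move/(pw_eventually_lt1 lim0); apply: filterS => n h.
by apply: bound_step; apply: ltW.
Qed.

Lemma pw_fin (k : R) : (forall x, f x < +oo)%E ->
  (lsup (fun n => f ((2 * k) *: s n) + 1) < +oo)%E.
Proof.
move=> fin; apply: (@le_lt_trans _ _ (f ((2 * (2 * k)) *: u) + 1 + 1)%E).
  apply: lsup_le.
  have : (2 * (2 * k)) *: (s n - u) @[n --> \oo] --> (0 : X).
    rewrite -(scaler0 _ (2 * (2 * k))); apply: cvgZr.
    rewrite -(subrr u); apply: cvgB => //; exact: cvg_cst.
  move/(pw_eventually_lt1 lim0); apply: filterS => n h.
  by apply: leeD => //; apply: bound_step; apply: ltW.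
rewrite -addeA; apply: lte_add_pinfty; first exact: fin.
by rewrite -EFinD ltry.
Qed.
End pointbound.
Section measlemmas.
Context d (T : measurableType d) (R : realType) (mu : {measure set T -> \bar R}).

Lemma cvg0_lt (u : nat -> \bar R) (e : R) : u n @[n --> \oo] --> 0%E -> 0 < e ->
  \forall n \near \oo, (u n < e%:E)%E.
Proof.
move=> /fine_cvgP[fin gcv] e0.
move/cvgrPdist_lt : gcv => /(_ e e0).
apply: filterS2 fin => n fn /=; rewrite sub0r normrN => h.
by rewrite -(fineK fn) lte_fin (le_lt_trans (ler_norm _) h).
Qed.

Lemma shrink_null (B : (set T)^nat) (N : set T) :
  (forall n, measurable (B n)) -> (forall n m, (n <= m)%N -> B m `<=` B n) ->
  (mu (B 0%N) < +oo)%E -> \bigcap_n B n `<=` N -> measurable N -> mu N = 0%E ->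
  forall e : R, 0 < e -> \forall n \near \oo, (mu (B n) < e%:E)%E.
Proof.
move=> mB nB B0 BN mN N0 e e0.
have mC : measurable (\bigcap_n B n) by exact: bigcapT_measurable.
have := @nonincreasing_cvg_mu _ _ _ mu B B0 mB mC.
have C0 : mu (\bigcap_n B n) = 0%E.
  apply/eqP; rewrite eq_le measure_ge0 andbT -N0.
  by apply: le_measure => //; rewrite inE.
rewrite C0 => /(_ _) h.
apply: cvg0_lt => //; apply: h.
by move=> n m nm; apply/subsetPset; exact: nB.
Qed.
End measlemmas.
Definition good (R : realType) (X : normedModType R) (f : X -> \bar R) :=
  [/\ forall x, (0 <= f x)%E,
      forall (t : R) (x y : X), 0 <= t <= 1 ->
        (f ((t *: x + (1 - t) *: y)%R) <= t%:E * f x + (1 - t)%:E * f y)%E,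
      f x @[x --> (0 : X)] --> 0%E &
      forall x, (f x < +oo)%E].

Section Fe.
Context d (T : measurableType d) (R : realType) (mu : {measure set T -> \bar R})
  (X : completeNormedModType R) (phi : T -> X -> \bar R).
Hypothesis hO : forall A W, atoms_sigma_union mu A -> separable_subset W ->
  restr_prod_measurable phi A W.
Variables (F : set T) (N : set T) (Nt : set T) (u1 : T -> X) (t : nat -> T -> X).
Hypotheses (mF : measurable F) (muF : (mu F < +oo)%E) (mN : measurable N)
  (N0 : mu N = 0%E) (hN : forall w, ~ N w -> good (phi w))
  (ts : forall n, simple_fun (t n)) (mNt : measurable Nt) (Nt0 : mu Nt = 0%E)
  (hNt : forall w, ~ Nt w -> t n w @[n --> \oo] --> \1_F w *: u1 w).

Let H (k : nat) w := lsup (fun n => phi w ((2 * k%:R) *: t n w) + 1)%E.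

Let H_meas k : measurable_fun F (H k).
Proof.
apply: (@measurable_fun_einfs _ _ _ F
  (fun m w => esups (fun n => phi w ((2 * k%:R) *: t n w) + 1)%E m) _ 0%N) => m.
apply: (@measurable_fun_esups _ _ _ F
  (fun n w => phi w ((2 * k%:R) *: t n w) + 1)%E) => n.
apply: emeasurable_funD; first exact: (phi_simple_meas hO).
exact: measurable_cst.
Qed.

Let H_bound k w : F w -> ~ N w -> ~ Nt w ->
  (phi w (k%:R *: u1 w) <= H k w)%E /\ (H k w < +oo)%E.
Proof.
move=> Fw nN nNt; have [g0 gc gl gf] := hN nN.
have cv := hNt nNt; rewrite indicE mem_set // scale1r in cv.
split; first exact: (pw_bound g0 gc gl cv).
exact: (pw_fin g0 gc gl cv).
Qed.

Lemma exists_Fe (eps : R) : 0 < eps -> exists (Fe : set T) (c : nat -> R),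
  [/\ measurable Fe, Fe `<=` F, (mu (F `\` Fe) < eps%:E)%E,
      (forall w, Fe w -> ~ N w) &
      forall k w, Fe w -> forall s : R, 0 <= s <= k%:R ->
        (phi w (s *: u1 w) <= (c k)%:E)%E].
Proof.
move=> eps0.
pose B k (c : R) := F `&` [set w | (c%:E < H k w)%E].
have mB k c : measurable (B k c) by exact: emeasurable_fun_o_infty.
have mNN : measurable (N `|` Nt) by exact: measurableU.
have NN0 : mu (N `|` Nt) = 0%E by rewrite measureU0.
have hc : forall k, exists c : R,
    (mu (B k c) < ((eps / 2) / (2 ^ k.+1)%:R)%:E)%E.
  move=> k.
  have hdec : forall n m, (n <= m)%N -> B k m%:R `<=` B k n%:R.
    move=> n m nm w [Fw h]; split => //; apply: le_lt_trans h.
    by rewrite lee_fin ler_nat.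
  have hB0 : (mu (B k 0%:R) < +oo)%E.
    apply: le_lt_trans muF; apply: le_measure; rewrite ?inE //.
    by move=> w [].
  have hcap : \bigcap_m B k m%:R `<=` N `|` Nt.
    move=> w Bw; apply: contrapT => nNN.
    have nN : ~ N w by move=> ?; apply: nNN; left.
    have nNt : ~ Nt w by move=> ?; apply: nNN; right.
    have [Fw _] := Bw 0%N I.
    have [_ Hf] := H_bound k Fw nN nNt.
    have [_ H0] := Bw 0%N I.
    have Hfin : H k w \is a fin_num.
      by rewrite ge0_fin_numE // ltW //; apply: le_lt_trans H0; rewrite lee_fin.
    have [_ /=] := Bw (Num.trunc (fine (H k w))).+1 I.
    rewrite -(fineK Hfin) lte_fin => /(lt_trans (truncnS_gt _)).
    by rewrite ltxx.
  have epos : 0 < (eps / 2) / (2 ^ k.+1)%:R.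
    apply: divr_gt0; first exact: divr_gt0.
    by rewrite ltr0n expn_gt0.
  have := shrink_null (mu := mu) (B := fun m => B k m%:R) (fun m => mB k _) hdec hB0 hcap mNN NN0 epos.
  move=> [M _ HM]; exists M%:R; exact: (HM M (leqnn M)).
have [c hc'] := choice hc.
pose Bad := \bigcup_k B k (c k) `|` (N `|` Nt).
have mBad : measurable Bad by apply: measurableU => //; exact: bigcupT_measurable.
exists (F `\` Bad), c; split.
- exact: measurableD.
- by move=> w [].
- apply: (@le_lt_trans _ _ (mu Bad)).
    apply: le_measure; rewrite ?inE.
    - by apply: measurableD => //; exact: measurableD.
    - exact: mBad.
    by move=> w [Fw nFe]; apply: contrapT => nB; apply: nFe; split.
  rewrite /Bad measureU0 //; last exact: bigcupT_measurable.
  apply: (@le_lt_trans _ _ (eps / 2)%:E); last first.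
    by rewrite lte_fin ltr_pdivrMr // ltr_pMr // ltr1n.
  apply: le_trans.
    apply: (@measure_sigma_subadditive _ _ _ mu _ (fun k => B k (c k))) => //.
    exact: bigcupT_measurable.
  apply: le_trans; last apply: (@epsilon_trick0 _ _ xpredT); last first.
    by apply: ltW; exact: divr_gt0.
  apply: lee_nneseries => // k _; exact: ltW.
- by move=> w [_ nB] Nw; apply: nB; right; left.
- move=> k w [Fw nB] s s0k.
  have nN : ~ N w by move=> ?; apply: nB; right; left.
  have nNt : ~ Nt w by move=> ?; apply: nB; right; right.
  have [g0 gc gl gf] := hN nN.
  have [h1 _] := H_bound k Fw nN nNt.
  case/andP: s0k => s0 sk.
  apply: le_trans (pw_mono g0 gc gl (u1 w) s0 sk) _.
  apply: le_trans h1 _; rewrite leNgt; apply/negP => hlt.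
  by apply: nB; left; exists k => //.
Qed.
End Fe.
Import HBNNSimple.

Section inner.
Context d (T : measurableType d) (R : realType) (mu : {measure set T -> \bar R}).
Local Open Scope ereal_scope.

Lemma int_le_nnsfun (f : T -> \bar R) (B : \bar R) : (forall x, 0 <= f x) ->
  (forall h : {nnsfun T >-> R}, (forall x, (h x)%:E <= f x) ->
     \int[mu]_x (h x)%:E <= B) ->
  \int[mu]_x f x <= B.
Proof.
move=> f0 hB; rewrite ge0_integralTE //; apply: ge_ereal_sup => _ [h hf <-].
rewrite -integralT_nnsfun; exact: hB.
Qed.

Lemma int_mono (f g : T -> \bar R) : (forall x, 0 <= f x) ->
  (forall x, f x <= g x) -> \int[mu]_x f x <= \int[mu]_x g x.
Proof.
move=> f0 fg; have g0 x : 0 <= g x by apply: le_trans (fg x).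
rewrite ge0_integralTE // ge0_integralTE //.
apply: le_ereal_sup => _ [h hf <-]; exists h => //= x.
exact: le_trans (fg x).
Qed.
End inner.
Section glue.
Context d (T : measurableType d) (R : realType) (mu : {measure set T -> \bar R})
  (X : completeNormedModType R) (phi : T -> X -> \bar R).

Lemma glue_in (Fe : set T) (p q : X) w : Fe w ->
  \1_(~` Fe) w *: p + \1_Fe w *: q = q.
Proof.
move=> Fw; rewrite !indicE (mem_set (Fw : Fe w)).
rewrite (memNset (A := ~` Fe)); last by move/(_ Fw).
by rewrite scale0r add0r scale1r.
Qed.

Lemma glue_out (Fe : set T) (p q : X) w : ~ Fe w ->
  \1_(~` Fe) w *: p + \1_Fe w *: q = p.
Proof.
move=> Fw; rewrite !indicE (mem_set (Fw : (~` Fe) w)) (memNset Fw).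
by rewrite scale0r addr0 scale1r.
Qed.

Variables (N Fe E : set T) (u0 u1 : T -> X) (a b C : R).
Hypotheses (mN : measurable N) (N0 : mu N = 0%E)
  (hN : forall w, ~ N w -> good (phi w)) (phi0 : forall w x, (0 <= phi w x)%E)
  (mFe : measurable Fe) (FeN : forall w, Fe w -> ~ N w) (mE : measurable E)
  (a0 : 0 < a) (b0 : 0 < b) (ba : 2 * b <= a)
  (hb : (\int[mu]_w phi w (b^-1 *: (\1_E w *: u0 w)) <= 1)%E)
  (C0 : 0 <= C) (hC : forall w, Fe w -> (phi w (a^-1 *: u1 w) <= C%:E)%E)
  (hCm : (C%:E * mu (Fe `&` E) <= 2^-1%:E)%E).

Lemma glue_int :
  (\int[mu]_w phi w (a^-1 *: (\1_E w *: (\1_(~` Fe) w *: u0 w + \1_Fe w *: u1 w)))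
     <= 1)%E.
Proof.
apply: int_le_nnsfun => // h hf.
pose A := ~` Fe `&` ~` N.
have mA : measurable A by apply: measurableI; apply: measurableC.
pose g1 w := ((h w) * \1_A w)%:E.
pose g2 w := (C * \1_(Fe `&` E) w)%:E.
have mg1 : measurable_fun setT g1.
  apply/measurable_EFinP; apply: measurable_funM; first exact: measurable_funPT.
  exact: measurable_indic.
have mg2 : measurable_fun setT g2.
  apply/measurable_EFinP; apply: measurable_funM; first exact: measurable_cst.
  by apply: measurable_indic; exact: measurableI.
have g10 w : (0 <= g1 w)%E by rewrite lee_fin mulr_ge0 //.
have g20 w : (0 <= g2 w)%E by rewrite lee_fin mulr_ge0 //.
have le1 : (\int[mu]_w (h w)%:E <= \int[mu]_w (g1 w + g2 w))%E.
  apply: ae_ge0_le_integral => //.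
  - by move=> w _; rewrite lee_fin.
  - by apply/measurable_EFinP; exact: measurable_funPT.
  - by move=> w _; rewrite adde_ge0.
  - exact: emeasurable_funD.
  exists N; split => // w /= nle; apply: contrapT => nNw; apply: nle => _.
  have [gp0 gpc gpl gpf] := hN nNw.
  have [Fw|nFw] := pselect (Fe w).
    have nA : ~ A w by move=> [].
    rewrite /g1 indicE memNset // mulr0 add0e.
    have := hf w; rewrite glue_in //.
    have [Ew|nEw] := pselect (E w).
      rewrite indicE mem_set // scale1r => /le_trans; apply.
      by rewrite /g2 indicE mem_set // mulr1; exact: hC.
    rewrite indicE memNset // scale0r scaler0 (pw_f0 gpl) => /le_trans; apply.
    exact: g20.
  have Aw : A w by split.
  rewrite /g1 indicE mem_set // mulr1; rewrite -[X in (X <= _)%E]adde0.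
  by apply: leeD.
rewrite ge0_integralD // in le1.
have I2 : (\int[mu]_w g2 w = C%:E * mu (Fe `&` E))%E.
  rewrite /g2; under eq_integral do rewrite EFinM.
  rewrite ge0_integralZl_EFin //; last first.
    by apply/measurable_EFinP; apply: measurable_indic; exact: measurableI.
  by rewrite integral_indic ?setIT //; exact: measurableI.
have I1 : (2%:E * \int[mu]_w g1 w <= 1)%E.
  rewrite -ge0_integralZl_EFin //.
  apply: le_trans hb; apply: int_mono => [w|w]; first by rewrite mule_ge0.
  have [Aw|nAw] := pselect (A w); last first.
    by rewrite /g1 indicE memNset // mulr0 mule0.
  have [nFw nNw] := Aw.
  have [gp0 gpc gpl gpf] := hN nNw.
  have := hf w; rewrite glue_out //.
  set y := \1_E w *: u0 w => hw.
  have ay : a^-1 *: y = (b / a) *: (b^-1 *: y).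
    by rewrite [RHS]scalerA mulrAC mulfV ?gt_eqF // mul1r.
  have ba1 : b / a <= 2^-1.
    by rewrite ler_pdivrMr // mulrC ler_pdivlMr // mulrC.
  have := pw_scale gpc gpl (t := b / a) (b^-1 *: y).
  rewrite -ay => /(_ _) sc.
  have {}sc : (phi w (a^-1 *: y) <= (b / a)%:E * phi w (b^-1 *: y))%E.
    apply: sc; apply/andP; split; first by rewrite divr_ge0 // ltW.
    by apply: le_trans ba1 _; rewrite invf_le1 // ler1n.
  rewrite /g1 indicE mem_set // mulr1.
  have e2 : (2%:E * (2^-1%:E * phi w (b^-1 *: y)) = phi w (b^-1 *: y))%E.
    by rewrite muleA -EFinM mulfV ?pnatr_eq0 // mul1e.
  rewrite -[X in (_ <= X)%E]e2; apply: lee_wpmul2l => //.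
  apply: le_trans hw _; apply: le_trans sc _.
  by apply: lee_wpmul2r => //; rewrite lee_fin.
apply: le_trans le1 _; rewrite I2.
have I1' : (\int[mu]_w g1 w <= 2^-1%:E)%E.
  have e : (\int[mu]_w g1 w = 2^-1%:E * (2%:E * \int[mu]_w g1 w))%E.
    by rewrite muleA -EFinM mulVf ?pnatr_eq0 // mul1e.
  rewrite e -[X in (_ <= X)%E]mule1; apply: lee_wpmul2l; last exact: I1.
  by rewrite lee_fin invr_ge0.
apply: le_trans (leeD I1' hCm) _.
by rewrite -EFinD lee_fin [X in _ <= X](splitr 1) mul1r.
Qed.
End glue.
Section strong.
Context d (T : measurableType d) (R : realType) (mu : {measure set T -> \bar R})
  (X : completeNormedModType R).

Lemma glue_simple (Fe : set T) (s t : T -> X) : measurable Fe ->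
  simple_fun s -> simple_fun t ->
  simple_fun (fun w => \1_(~` Fe) w *: s w + \1_Fe w *: t w).
Proof.
move=> mFe [fs ms] [ft mt]; split.
  apply: (@sub_finite_set _ _ (range s `|` range t)); last by rewrite finite_setU.
  move=> _ [w _ <-]; have [Fw|nFw] := pselect (Fe w).
    by right; rewrite glue_in //; exists w.
  by left; rewrite glue_out //; exists w.
move=> y.
rewrite (_ : _ @^-1` _ = (~` Fe `&` s @^-1` [set y]) `|` (Fe `&` t @^-1` [set y])).
  apply: measurableU; apply: measurableI => //; exact: measurableC.
apply/seteqP; split => w /=.
  have [Fw|nFw] := pselect (Fe w).
    by rewrite glue_in // => ->; right.
  by rewrite glue_out // => ->; left.
case=> -[Fw ->]; [by rewrite glue_out|by rewrite glue_in].
Qed.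

Lemma glue_strong (F Fe : set T) (u0 u1 : T -> X) : measurable Fe -> Fe `<=` F ->
  strongly_measurable mu u0 -> strongly_measurable mu (fun w => \1_F w *: u1 w) ->
  strongly_measurable mu (fun w => \1_(~` Fe) w *: u0 w + \1_Fe w *: u1 w).
Proof.
move=> mFe FeF [s [ss [Ns [mNs Ns0 hs]]]] [t [ts [Nt [mNt Nt0 ht]]]].
exists (fun n w => \1_(~` Fe) w *: s n w + \1_Fe w *: t n w); split.
  by move=> n; apply: glue_simple.
exists (Ns `|` Nt); split; [exact: measurableU|by rewrite measureU0|].
move=> w /= ncv; apply: contrapT => nN; apply: ncv.
have nNs : ~ Ns w by move=> ?; apply: nN; left.
have nNt : ~ Nt w by move=> ?; apply: nN; right.
have [Fw|nFw] := pselect (Fe w).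
  rewrite glue_in //.
  have := contra_not (ht w) nNt => /contrapT /=.
  rewrite indicE mem_set ?scale1r; last exact: FeF.
  by apply: cvg_trans; apply: near_eq_cvg; near=> n; rewrite glue_in.
rewrite glue_out //.
have := contra_not (hs w) nNs => /contrapT /=.
by apply: cvg_trans; apply: near_eq_cvg; near=> n; rewrite glue_out.
Unshelve. all: end_near.
Qed.
End strong.
Section lux.
Context d (T : measurableType d) (R : realType) (mu : {measure set T -> \bar R})
  (X : completeNormedModType R) (phi : T -> X -> \bar R).

Lemma lux_ge0 (u : T -> X) : (0 <= lux_norm mu phi u)%E.
Proof.
apply: le_ereal_inf_tmp => _ [a [a0 _] <-]; rewrite lee_fin ltW //.
Qed.

Lemma lux_le (u : T -> X) (a : R) : 0 < a ->
  (\int[mu]_w phi w (a^-1 *: u w) <= 1)%E -> (lux_norm mu phi u <= a%:E)%E.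
Proof. by move=> a0 ha; apply: ereal_inf_lbound; exists a. Qed.

Lemma lux_lt (u : T -> X) (x : \bar R) : (lux_norm mu phi u < x)%E ->
  exists a : R, [/\ 0 < a, (a%:E < x)%E &
    (\int[mu]_w phi w (a^-1 *: u w) <= 1)%E].
Proof.
by move=> /ereal_inf_lt[_ [a [a0 ha] <-] ax]; exists a.
Qed.

Lemma cvg0_crit (l : nat -> \bar R) : (forall n, (0 <= l n)%E) ->
  (forall e : R, 0 < e -> \forall n \near \oo, (l n <= e%:E)%E) ->
  l n @[n --> \oo] --> 0%E.
Proof.
move=> l0 le; apply/fine_cvgP; split.
  apply: filterS (le 1 ltr01) => n h.
  by rewrite ge0_fin_numE // (le_lt_trans h) // ltry.
apply/cvgrPdist_le => e e0; apply: filterS (le e e0) => n h /=.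
rewrite sub0r normrN ger0_norm ?fine_ge0 //.
have fn : l n \is a fin_num by rewrite ge0_fin_numE // (le_lt_trans h) // ltry.
by rewrite -lee_fin fineK.
Qed.
End lux.
Section main.
Context d (T : measurableType d) (R : realType) (mu : {measure set T -> \bar R})
  (X : completeNormedModType R) (phi : T -> X -> \bar R).
Hypothesis phi0 : forall w x, (0 <= phi w x)%E.
Hypothesis hO : forall A W, atoms_sigma_union mu A -> separable_subset W ->
  restr_prod_measurable phi A W.
Variables (N : set T).
Hypotheses (mN : measurable N) (N0 : mu N = 0%E) (hN : forall w, ~ N w -> good (phi w)).

Lemma main_C (u0 : T -> X) (F : set T) (eps : R) (u1 : T -> X) :
  C_phi mu phi u0 -> measurable F -> (mu F < +oo)%E -> 0 < eps ->
  strongly_measurable mu (fun w => \1_F w *: u1 w) ->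
  exists Fe : set T, [/\ measurable Fe, Fe `<=` F,
      (mu (F `\` Fe) < eps%:E)%E &
      C_phi mu phi (fun w => \1_(~` Fe) w *: u0 w + \1_Fe w *: u1 w)].
Proof.
move=> [[sm0 lux0] hC0] mF muF eps0 sm1.
have sm1' := sm1; case: sm1' => t [ts [Nt [mNt Nt0 ht]]].
have hNt : forall w, ~ Nt w -> t n w @[n --> \oo] --> \1_F w *: u1 w.
  move=> w nNt; apply: contrapT => ncv; apply: nNt; apply: ht; exact: ncv.
have [Fe [c [mFe FeF muFe FeN hc]]] :=
  exists_Fe hO mF muF mN N0 hN ts mNt Nt0 hNt eps0.
pose C k := Num.max (c k) 0.
have C0 k : 0 <= C k by rewrite le_max lexx orbT.
have hC k w : Fe w -> forall s, 0 <= s <= k%:R ->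
    (phi w (s *: u1 w) <= (C k)%:E)%E.
  move=> Fw s hs; apply: le_trans (hc k w Fw s hs) _.
  by rewrite lee_fin le_max lexx.
exists Fe; split => //.
set v := fun w => _.
have vT w : v w = \1_setT w *: v w by rewrite indicE mem_set // scale1r.
split.
  split; first exact: (glue_strong mFe FeF sm0 sm1).
  have [b [b0 _ hb]] := lux_lt lux0.
  have muFfin : mu F \is a fin_num by rewrite ge0_fin_numE.
  pose m := fine (mu F).
  have m0 : 0 <= m by rewrite fine_ge0.
  have muFe_le : (mu (Fe `&` setT) <= m%:E)%E.
    rewrite setIT /m fineK //; apply: le_measure; rewrite ?inE //.
  pose C1 := C 1%N.
  pose a := Num.max (2 * b) (Num.max 1 (2 * (C1 * m))).
  have a1 : 1 <= a by rewrite /a !le_max lexx orbT.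
  have a0 : 0 < a by apply: lt_le_trans a1.
  apply: le_lt_trans (lux_le (a := a) a0 _) (ltry _).
  under eq_integral do rewrite vT.
  apply: (glue_int (C := a^-1 * C1) mN N0 hN phi0 mFe measurableT a0 b0).
  - by rewrite /a le_max lexx.
  - by under eq_integral do rewrite indicE mem_set // scale1r.
  - by apply: mulr_ge0; [rewrite invr_ge0 ltW | exact: C0].
  - move=> w Fw; have [gp0 gpc gpl gpf] := hN (FeN w Fw).
    apply: le_trans (pw_scale gpc gpl _ _) _.
      by rewrite invr_ge0 ltW //= invf_le1.
    rewrite EFinM; apply: lee_wpmul2l; first by rewrite lee_fin invr_ge0 ltW.
    have := hC 1%N w Fw 1; rewrite scale1r; apply; by rewrite ler01 lexx.
  - apply: le_trans (lee_wpmul2l _ muFe_le) _; first by rewrite lee_fin; apply: mulr_ge0; [rewrite invr_ge0 ltW|exact: C0].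
    rewrite -EFinM lee_fin -mulrA ler_pdivrMl // mulrC.
    rewrite ler_pdivlMr // mulrC.
    by rewrite /a !le_max [C1 * m * 2]mulrC lexx !orbT.
move=> E mE hE.
apply: cvg0_crit; first by move=> n; exact: lux_ge0.
move=> e e0.
have h1 := cvg0_lt (hC0 E mE hE) (divr_gt0 e0 (ltr0n R 2)).
pose K := (Num.trunc (e^-1)).+1.
pose CK := C K.
have eK : e^-1 <= K%:R by apply: ltW; exact: truncnS_gt.
case: hE => Ne [mNe Ne0 hNe].
pose B n := Fe `&` \bigcup_(m in [set m | (n <= m)%N]) E m.
have mB n : measurable (B n).
  by apply: measurableI => //; apply: bigcup_measurable => k _.
have hdec : forall n m, (n <= m)%N -> B m `<=` B n.
  move=> n m nm w [Fw [k /= mk Ek]]; split => //; exists k => //.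
  exact: leq_trans mk.
have hB0 : (mu (B 0%N) < +oo)%E.
  apply: le_lt_trans muF; apply: le_measure; rewrite ?inE //.
  by move=> w [/FeF].
have hcap : \bigcap_n B n `<=` Ne.
  move=> w Bw; apply: hNe => /= cv.
  move/cvgrPdist_lt : cv => /(_ _ (ltr01 : (0 : R) < 1)) [N1 _ HN1].
  have [_ [k /= N1k Ek]] := Bw N1 I.
  have := HN1 k N1k; rewrite /= indicE mem_set // sub0r normrN normr1.
  by rewrite ltxx.
have e'0 : 0 < 2^-1 / (CK + 1).
  by apply: divr_gt0; [rewrite invr_gt0 ltr0n|apply: ltr_wpDl; [exact: C0|exact: ltr01]].
have h2 := shrink_null mB hdec hB0 hcap mNe Ne0 e'0.
apply: filterS2 h1 h2 => n hn1 hn2.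
have [b [b0 be hb]] := lux_lt hn1.
apply: (lux_le e0).
apply: (glue_int (C := CK) mN N0 hN phi0 mFe (mE n) e0 b0 _ hb (C0 K)).
- rewrite lte_fin in be; rewrite -ler_pdivlMl ?ltr0n //.
  by rewrite mulrC ltW.
- move=> w Fw; apply: hC => //.
  by rewrite invr_ge0 ltW //= eK.
- have hm : (mu (Fe `&` E n) <= (2^-1 / (CK + 1))%:E)%E.
    apply: le_trans (ltW hn2); apply: le_measure; rewrite ?inE //.
    + by apply: measurableI.
    + by move=> w [Fw Ew]; split => //; exists n => /=.
  apply: le_trans (lee_wpmul2l _ hm) _; first by rewrite lee_fin C0.
  rewrite -EFinM lee_fin mulrCA ger_pMr ?invr_gt0 ?ltr0n //.
  rewrite ler_pdivrMr; last by apply: ltr_wpDl; [exact: C0|exact: ltr01].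
  by rewrite mul1r lerDl ler01.
Qed.
End main.
Unset Implicit Arguments.
Theorem lemma3p4p7 (d : measure_display) (T : measurableType d) (R : realType)
    (mu : {measure set T -> \bar R}) (X : completeNormedModType R)
    (phi : T -> X -> \bar R) :
  (0 < mu setT)%E ->
  orlicz_integrand mu phi -> real_valued_integrand mu phi ->
  almost_decomposable mu (C_phi mu phi) /\
  almost_decomposable mu (C_phi_sigma mu phi).
Proof.
move=> _ [phi0 [N1 [mN1 N10 sub1]] hmeas] [N2 [mN2 N20 sub2]].
pose N := N1 `|` N2.
have mN : measurable N by exact: measurableU.
have N0 : mu N = 0%E by rewrite /N measureU0.
have hN : forall w, ~ N w -> good (phi w).
  move=> w nN.
  have nN1 : ~ N1 w by move=> ?; apply: nN; left.
  have nN2 : ~ N2 w by move=> ?; apply: nN; right.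
  have h1 := contra_not (sub1 w) nN1; move/contrapT : h1 => [_ cv _ [_ l0] _].
  have h2 := contra_not (sub2 w) nN2; move/contrapT : h2 => rv.
  by split.
split.
  move=> u0 F eps u1 hu0 mF muF eps0 _ sm1.
  have [Fe [mFe FeF muFe hC]] := main_C phi0 hmeas mN N0 hN hu0 mF muF eps0 sm1.
  by exists Fe.
move=> u0 F eps u1 [hu0 [S [[G GE hG] [Ns [mNs Ns0 subs]]]]] mF muF eps0 _ sm1.
have [Fe [mFe FeF muFe hC]] := main_C phi0 hmeas mN N0 hN hu0 mF muF eps0 sm1.
exists Fe; split => //; split => //.
exists (S `|` F); split.
  exists (fun i => G i `|` F).
    by rewrite bigcupUl -?GE //; exists 0%N.
  move=> i; have [mG muG] := hG i; split; first exact: measurableU.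
  apply: le_lt_trans (measureU2 _ mG mF) _.
  by apply: lte_add_pinfty.
exists Ns; split => // w /= h; apply: contrapT => nNs; apply: h => nSF.
have nF : ~ F w by move=> ?; apply: nSF; right.
have nS : ~ S w by move=> ?; apply: nSF; left.
rewrite glue_out; last by move/FeF.
have := contra_not (subs w) nNs; move/contrapT; apply; exact: nS.
Qed.
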